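(* Let $\gamma>1$ and let $\Psi$ be a Borel probability measure on $\Delta_n$ such that $\Psi(\{\mathbf s\in\Delta_n:\mathbf a^\top\mathbf s=0\})=0$ for every nonzero $\mathbf a\in\mathbb R^n$. Define $\eta_{\mathbf x}=\int_{\Delta_n}(\mathbf x^\top\mathbf s)^\gamma\,\Psi(\mathrm d\mathbf s)$ for $\mathbf x\in[0,\infty)^n$, and assume $\eta_{\mathbf e_i}>0$ for $i=1,\dots,n$. Then the function $f(\mathbf w)=\eta_{\mathbf w}/\left(\sum_{i=1}^nw_i\eta_{\mathbf e_i}^{1/\gamma}\right)^\gamma$ has a unique minimizer on $\Delta_n$.
   Context: $\Delta_n=\{\mathbf x\in[0,1]^n:x_1+\dots+x_n=1\}$ and $\mathbf e_1,\dots,\mathbf e_n$ are the standard basis vectors of $\mathbb R^n$. *)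

(* Defs.v *)
From HB Require Import structures.
From mathcomp Require Import all_boot all_order all_algebra.
From mathcomp Require Import all_classical all_reals all_analysis.
Set Implicit Arguments. Unset Strict Implicit. Unset Printing Implicit Defensive.
Import Order.TTheory GRing.Theory Num.Theory.
Local Open Scope classical_set_scope.
Local Open Scope ring_scope.

(* Points of R^n are represented as n-tuples; the measurable structure on
   n.-tuple R is the product sigma-algebra (= Borel sigma-algebra of R^n). *)

Definition dotp (R : realType) (n : nat) (x s : n.-tuple R) : R :=
  \sum_(i < n) tnth x i * tnth s i.

Definition basis_vec (R : realType) (n : nat) (i : 'I_n) : n.-tuple R :=
  [tuple (if j == i then 1 else 0 : R) | j < n].

Definition simplex (R : realType) (n : nat) : set (n.-tuple R) :=
  [set x | (forall i, 0 <= tnth x i <= 1) /\ \sum_(i < n) tnth x i = 1].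

Arguments simplex R n : clear implicits.
Arguments basis_vec R {n} i.

Definition eta_int (R : realType) (n : nat) (Psi : probability (n.-tuple R) R)
  (gamma : R) (x : n.-tuple R) : \bar R :=
  (\int[Psi]_(s in simplex R n) ((dotp x s) `^ gamma)%:E)%E.

Definition fobj (R : realType) (n : nat) (Psi : probability (n.-tuple R) R)
  (gamma : R) (w : n.-tuple R) : R :=
  fine (eta_int Psi gamma w) /
  (\sum_(i < n) tnth w i * (fine (eta_int Psi gamma (basis_vec R i))) `^ gamma^-1)
    `^ gamma.

(* Main.v *)
Require Import Defs.
From HB Require Import structures.
From mathcomp Require Import all_boot all_order all_algebra.
From mathcomp Require Import all_classical all_reals all_analysis.
From mathcomp Require Import measurable_realfun.
From mathcomp Require Import ring lra.
Import numFieldNormedType.Exports.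
Import Order.TTheory GRing.Theory Num.Theory.
Local Open Scope classical_set_scope.
Local Open Scope ring_scope.
Lemma mid_gt (R : realFieldType) (a b : R) : b < a -> b < (a+b)/2.
Proof. move=> h; lra. Qed.
Lemma mid_lt (R : realFieldType) (a b : R) : b < a -> (a+b)/2 < a.
Proof. move=> h; lra. Qed.
Lemma mid_sub (R : realFieldType) (a b : R) : a - (a+b)/2 = (a+b)/2 - b.
Proof. lra. Qed.
Lemma mid_fin (R : realFieldType) (x y z : R) : y - x < z - y -> y < (z + x) / 2.
Proof. move=> h; lra. Qed.
Lemma twice_half (R : realFieldType) (x : R) : (x + x) / 2 = x.
Proof. lra. Qed.
Lemma aux1 (R : realFieldType) (A B C D : R) : A - B <= C -> C <= D -> A <= B + D.
Proof. move=> h1 h2; lra. Qed.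
Lemma aux2 (R : realFieldType) (A B D : R) : A <= B -> 0 <= D -> A <= B + D.
Proof. move=> h1 h2; lra. Qed.
Lemma aux3 (R : realFieldType) (A B C : R) : C <= (A+B)/2 -> 0 <= A + B - 2*C.
Proof. move=> h1; lra. Qed.
Lemma aux4 (R : realFieldType) (A B C : R) : C < (A+B)/2 -> 0 < A + B - 2*C.
Proof. move=> h1; lra. Qed.
Lemma aux5 (R : realFieldType) (A B C : R) : 2*C + (A + B - 2*C) = A + B.
Proof. lra. Qed.
Lemma aux6 (R : realFieldType) (X Y M r : R) : X + Y = 2*M + r -> 0 < r -> M < (X+Y)/2.
Proof. move=> h1 h2; lra. Qed.
Lemma aux7 (R : realFieldType) (a b c : R) : a <= b + c -> b <= a + c -> `|a - b| <= c.
Proof. by move=> h1 h2; rewrite ler_norml; apply/andP; split; lra. Qed.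
Lemma aux8 (R : realFieldType) (a m b : R) : a <= m -> m < (b + a)/2 -> b <= a -> False.
Proof. move=> h1 h2 h3; lra. Qed.
Section Dev.
Context (R : realType) (n : nat) (gamma : R) (Psi : probability (n.-tuple R) R).
Local Notation S := (simplex R n).
Local Notation eta := (eta_int Psi gamma).

Lemma mdotp (x : n.-tuple R) : measurable_fun setT (dotp x).
Proof.
rewrite /dotp; apply: measurable_sum => i.
apply: measurable_funM; first exact: measurable_cst.
exact: measurable_tnth.
Qed.

Lemma mpre (f : n.-tuple R -> R) (B : set R) : measurable_fun setT f ->
  measurable B -> measurable (f @^-1` B).
Proof. by move=> mf mB; have := mf measurableT B mB; rewrite setTI. Qed.

Lemma mS : measurable S.
Proof.
have -> : S = (\bigcap_(i in [set: 'I_n]) ((fun x : n.-tuple R => tnth x i) @^-1` `[0, 1]%classic))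
   `&` ((fun x : n.-tuple R => \sum_(i < n) tnth x i) @^-1` [set 1]).
  apply/seteqP; split => x /=.
    by move=> [H1 H2]; split => // i _ /=; rewrite in_itv /=; exact: H1.
  by move=> [H1 H2]; split => // i; have := H1 i I; rewrite /= in_itv.
apply: measurableI.
  apply: fin_bigcap_measurable => [|i _]; first exact: finite_finset. apply: mpre; last exact: measurable_itv.
  exact: measurable_tnth.
apply: mpre => //; apply: measurable_sum => i; exact: measurable_tnth.
Qed.

Definition hh (x s : n.-tuple R) : \bar R := ((dotp x s) `^ gamma)%:E.

Lemma mhh x : measurable_fun S (hh x).
Proof.
apply/measurable_EFinP.
have H : measurable_fun setT (fun s => (dotp x s) `^ gamma).
  exact: (measurableT_comp (measurable_powR gamma) (mdotp x)).
exact: (measurable_funS measurableT (@subsetT _ S) H).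
Qed.


Definition nonneg (x : n.-tuple R) := forall i, 0 <= tnth x i.

Lemma dotp_ge0 x s : nonneg x -> S s -> 0 <= dotp x s.
Proof.
move=> hx [hs _]; rewrite /dotp; apply: sumr_ge0 => i _.
by apply: mulr_ge0 => //; case/andP: (hs i).
Qed.

Lemma dotp_le x s : nonneg x -> S s -> dotp x s <= \sum_(i < n) tnth x i.
Proof.
move=> hx [hs _]; rewrite /dotp; apply: ler_sum => i _.
have /andP[s0 s1] := hs i.
by rewrite -[leRHS]mulr1; apply: ler_wpM2l.
Qed.

Lemma eta_ge0 x : (0 <= eta x)%E.
Proof. by apply: integral_ge0 => s _; rewrite lee_fin powR_ge0. Qed.

Lemma eta_le x M : 0 <= gamma -> (forall s, S s -> 0 <= dotp x s <= M) ->
  (eta x <= (M `^ gamma)%:E)%E.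
Proof.
move=> g0 hM.
have H : (eta x <= \int[Psi]_(s in S) cst (M `^ gamma)%:E s)%E.
  apply: ge0_le_integral => //.
  - exact: mS.
  - by move=> s _; rewrite lee_fin powR_ge0.
  - exact: mhh.
  - move=> s Ss; rewrite lee_fin; have /andP[h0 h1] := hM s Ss.
    by apply: ge0_ler_powR => //; rewrite nnegrE //; apply: le_trans h1.
apply: le_trans H _.
rewrite integral_cst; last exact: mS.
rewrite -[leRHS]mule1; apply: lee_wpmul2l; first by rewrite lee_fin powR_ge0.
exact: probability_le1 _ mS.
Qed.

Definition scl (t : R) (x : n.-tuple R) : n.-tuple R := [tuple t * tnth x i | i < n].

Lemma dotp_scl t x s : dotp (scl t x) s = t * dotp x s.
Proof. by rewrite /dotp mulr_sumr; apply: eq_bigr => i _; rewrite tnth_mktuple mulrA. Qed.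

Lemma nonneg_scl t x : 0 <= t -> nonneg x -> nonneg (scl t x).
Proof. by move=> t0 hx i; rewrite tnth_mktuple mulr_ge0. Qed.

Lemma eta_scl t x : 0 <= t -> nonneg x -> eta (scl t x) = ((t `^ gamma)%:E * eta x)%E.
Proof.
move=> t0 hx; rewrite /eta_int -ge0_integralZl //.
- apply: eq_integral => s; rewrite inE => Ss.
  by rewrite dotp_scl powRM // ?dotp_ge0 // EFinM.
- exact: mS.
- exact: mhh.
- by move=> s _; rewrite lee_fin powR_ge0.
- by rewrite lee_fin powR_ge0.
Qed.

Lemma eta_fin x : 0 <= gamma -> nonneg x -> eta x \is a fin_num.
Proof.
move=> g0 hx; rewrite ge0_fin_numE ?eta_ge0 //.
have H := @eta_le x (\sum_(i < n) tnth x i) g0.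
have H2 : (eta x <= ((\sum_(i < n) tnth x i) `^ gamma)%:E)%E.
  by apply: H => s Ss; rewrite dotp_ge0 // dotp_le.
by apply: le_lt_trans H2 _; exact: ltry.
Qed.

Lemma geta_scl t x : 0 <= gamma -> 0 <= t -> nonneg x ->
  fine (eta (scl t x)) = t `^ gamma * fine (eta x).
Proof.
move=> g0 t0 hx; rewrite eta_scl // -(fineK (eta_fin x g0 hx)) -EFinM /=.
by [].
Qed.

Definition cc (i : 'I_n) : R := fine (eta (basis_vec R i)) `^ gamma^-1.
Definition LL (w : n.-tuple R) : R := \sum_(i < n) tnth w i * cc i.

Lemma fobjE w : fobj Psi gamma w = fine (eta w) / LL w `^ gamma.
Proof. by []. Qed.

Lemma LL_scl t x : LL (scl t x) = t * LL x.
Proof. by rewrite /LL mulr_sumr; apply: eq_bigr => i _; rewrite tnth_mktuple mulrA. Qed.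

Lemma LL_ge0 x : nonneg x -> 0 <= LL x.
Proof. by move=> hx; apply: sumr_ge0 => i _; rewrite mulr_ge0 // powR_ge0. Qed.

Lemma fobj_scl t x : 0 <= gamma -> 0 < t -> nonneg x ->
  fobj Psi gamma (scl t x) = fobj Psi gamma x.
Proof.
move=> g0 t0 hx.
change (fine (eta (scl t x)) / LL (scl t x) `^ gamma = fine (eta x) / LL x `^ gamma).
have E1 := LL_scl t x.
have E2 := geta_scl t x g0 (ltW t0) hx.
have E3 : (t * LL x) `^ gamma = t `^ gamma * LL x `^ gamma.
  by apply: powRM; [exact: ltW | exact: LL_ge0].
transitivity (t `^ gamma * fine (eta x) / (t `^ gamma * LL x `^ gamma)).
  by rewrite -E3 -E1; congr (_ / _).
by rewrite -mulf_div divff ?mul1r // gt_eqF // powR_gt0.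
Qed.

Lemma is_derive_powR (x : R) : 0 < x ->
  is_derive x 1 (fun y : R => y `^ gamma) (gamma * x `^ (gamma - 1)).
Proof.
move=> x0.
have hx : x \in `]0, +oo[ by rewrite in_itv /= x0.
rewrite -(powR_derive1 gamma hx) derive1E; apply: derivableP.
exact: derivable_powR.
Qed.

Lemma MVT_powR (b a : R) : 0 < b -> b < a -> exists2 c, b < c < a &
  a `^ gamma - b `^ gamma = gamma * c `^ (gamma - 1) * (a - b).
Proof.
move=> b0 ba.
have H1 : forall x, x \in `]b, a[ ->
    is_derive x 1 (fun y : R => y `^ gamma) (gamma * x `^ (gamma - 1)).
  move=> x; rewrite in_itv /= => /andP[bx _]; apply: is_derive_powR.
  exact: lt_trans bx.
have D : {in `[b, a], forall x, derivable (fun y : R => y `^ gamma) x 1}.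
  move=> x; rewrite in_itv /= => /andP[bx _].
  apply: derivable_powR; rewrite in_itv /= andbT; exact: lt_le_trans bx.
have H2 := derivable_within_continuous D.
have [c hc E] := MVT ba H1 H2.
by move: hc; rewrite in_itv /= => hc; exists c.
Qed.

Lemma half_powR_lt : 1 < gamma -> (2^-1 : R) `^ gamma < 2^-1.
Proof.
move=> g1.
have h2 : (0 : R) < 2^-1 by rewrite invr_gt0.
have -> : gamma = 1 + (gamma - 1) by rewrite addrC subrK.
rewrite powRD; last by apply/implyP => _; rewrite invr_eq0 pnatr_eq0.
rewrite powRr1 ?ltW // -[ltRHS]mulr1 ltr_pM2l //.
have hr : 0 < gamma - 1 by rewrite subr_gt0.
have i1 : (2^-1 : R) \in Num.nneg by rewrite nnegrE ltW.
have i2 : (1 : R) \in Num.nneg by rewrite nnegrE.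
have hl : (2^-1 : R) < 1 by rewrite invf_lt1 // ltr1n.
by have := gt0_ltr_powR hr i1 i2 hl; rewrite powR1.
Qed.

Lemma powR_mid_lt (a b : R) : 1 < gamma -> 0 <= a -> 0 <= b -> a != b ->
  ((a + b) / 2) `^ gamma < (a `^ gamma + b `^ gamma) / 2.
Proof.
move=> g1.
wlog ba : a b / b < a.
  move=> H a0 b0 ab; have [ba|ab'] := ltP b a; first exact: H.
  rewrite addrC [X in _ < X / 2]addrC; apply: H => //.
    by rewrite lt_neqAle ab ab'.
  by rewrite eq_sym.
move=> a0 b0 ab.
have g0 : 0 < gamma by apply: lt_trans g1.
have [b00|bpos] := eqVneq b 0.
  subst b; rewrite addr0 powR0 ?gt_eqF // addr0 powRM ?invr_ge0 ?ler0n //.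
  rewrite ltr_pM2l ?half_powR_lt //; apply: powR_gt0.
  by rewrite lt_neqAle eq_sym ab a0.
have bp : 0 < b by rewrite lt_neqAle eq_sym bpos.
set m := (a + b) / 2.
have bm : b < m by apply: mid_gt.
have ma : m < a by apply: mid_lt.
have [c1 /andP[bc1 c1m] E1] := MVT_powR _ _ bp bm.
have [c2 /andP[mc2 c2a] E2] := MVT_powR _ _ (lt_trans bp bm) ma.
have hc : c1 `^ (gamma - 1) < c2 `^ (gamma - 1).
  apply: gt0_ltr_powR; rewrite ?subr_gt0 ?nnegrE //.
  - by apply: ltW; apply: lt_trans bc1.
  - by apply: ltW; apply: lt_trans mc2; apply: lt_trans bm.
  - exact: lt_trans c1m mc2.
have ham : a - m = m - b by apply: mid_sub.
have hpos : 0 < gamma * (m - b) by apply: mulr_gt0 => //; rewrite subr_gt0.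
have : m `^ gamma - b `^ gamma < a `^ gamma - m `^ gamma.
  rewrite E1 E2 ham -!mulrA [gamma * (_ * _)]mulrCA [gamma * (c2 `^ _ * _)]mulrCA.
  by rewrite ltr_pM2r.
by move/mid_fin.
Qed.

Lemma powR_mid_le (a b : R) : 1 < gamma -> 0 <= a -> 0 <= b ->
  ((a + b) / 2) `^ gamma <= (a `^ gamma + b `^ gamma) / 2.
Proof.
move=> g1 a0 b0; have [->|ab] := eqVneq a b; last exact/ltW/powR_mid_lt.
by rewrite !twice_half.
Qed.

Lemma powR_lip1 (a b M : R) : 1 <= gamma -> 0 <= b -> b <= a -> a <= M ->
  a `^ gamma - b `^ gamma <= gamma * M `^ (gamma - 1) * (a - b).
Proof.
move=> g1 b0 ba aM.
have g0 : 0 < gamma by apply: lt_le_trans g1.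
have a0 : 0 <= a by apply: le_trans ba.
have hmon c : 0 <= c -> c <= M -> c `^ (gamma - 1) <= M `^ (gamma - 1).
  move=> c0 cM; apply: ge0_ler_powR; rewrite ?subr_ge0 ?nnegrE //.
  exact: le_trans cM.
have [->|bpos] := eqVneq b 0.
  rewrite powR0 ?gt_eqF // !subr0.
  have [->|apos] := eqVneq a 0; first by rewrite powR0 ?gt_eqF // mulr0.
  have hD : a `^ (gamma - 1 + 1) = a `^ (gamma - 1) * a `^ 1.
    by apply: powRD; rewrite apos implybT.
  rewrite -[X in a `^ X](subrK 1 gamma) hD.
  rewrite powRr1 //; apply: ler_wpM2r => //.
  rewrite -[leLHS]mul1r; apply: ler_pM => //; first exact: powR_ge0.
  exact: hmon.
have [->|ba'] := eqVneq b a; first by rewrite !subrr mulr0.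
have bp : 0 < b by rewrite lt_neqAle eq_sym bpos.
have ba2 : b < a by rewrite lt_neqAle ba' ba.
have [c /andP[bc ca] ->] := MVT_powR _ _ bp ba2.
apply: ler_wpM2r; first by rewrite subr_ge0.
apply: ler_wpM2l; first exact: ltW.
apply: hmon; first by apply: ltW; apply: lt_trans bc.
by apply: ltW; apply: lt_le_trans aM.
Qed.

Definition mid (x y : n.-tuple R) : n.-tuple R :=
  [tuple (tnth x i + tnth y i) / 2 | i < n].
Definition tsub (x y : n.-tuple R) : n.-tuple R :=
  [tuple tnth x i - tnth y i | i < n].

Lemma dotp_mid x y s : dotp (mid x y) s = (dotp x s + dotp y s) / 2.
Proof.
rewrite /dotp -big_split /= mulr_suml; apply: eq_bigr => i _.
by rewrite tnth_mktuple mulrAC mulrDl.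
Qed.

Lemma dotp_tsub x y s : dotp (tsub x y) s = dotp x s - dotp y s.
Proof.
rewrite /dotp -sumrB; apply: eq_bigr => i _.
by rewrite tnth_mktuple mulrBl.
Qed.

Lemma nonneg_mid x y : nonneg x -> nonneg y -> nonneg (mid x y).
Proof.
move=> hx hy i; rewrite tnth_mktuple; apply: divr_ge0 => //.
exact: addr_ge0.
Qed.

Lemma dotp_diff_le x y s : S s ->
  `|dotp x s - dotp y s| <= \sum_(i < n) `|tnth x i - tnth y i|.
Proof.
move=> [hs _]; rewrite -dotp_tsub /dotp.
apply: le_trans (ler_norm_sum _ _ _) _; apply: ler_sum => i _.
rewrite tnth_mktuple normrM; have /andP[s0 s1] := hs i.
by rewrite [X in _ * X]ger0_norm // -[leRHS]mulr1 ler_wpM2l.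
Qed.

Lemma mZ a : measurable [set s | S s /\ dotp a s = 0].
Proof.
have -> : [set s | S s /\ dotp a s = 0] = S `&` (dotp a @^-1` [set 0]) by [].
by apply: measurableI; [exact: mS | apply: mpre => //; exact: mdotp].
Qed.


Lemma mhr x : measurable_fun S (fun s => dotp x s `^ gamma).
Proof. apply/measurable_EFinP; exact: mhh. Qed.

Lemma eta_lip x y M : 1 <= gamma -> nonneg x -> nonneg y ->
  \sum_(i < n) tnth x i <= M -> \sum_(i < n) tnth y i <= M ->
  fine (eta x) <= fine (eta y) +
    gamma * M `^ (gamma - 1) * \sum_(i < n) `|tnth x i - tnth y i|.
Proof.
move=> g1 hx hy sx sy.
have g0 : 0 <= gamma by apply: le_trans g1.
set K := gamma * M `^ (gamma - 1).
set d := \sum_(i < n) `|tnth x i - tnth y i|.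
have K0 : 0 <= K by rewrite mulr_ge0 // powR_ge0.
have d0 : 0 <= d by apply: sumr_ge0 => i _.
have pw : forall s, S s -> dotp x s `^ gamma <= dotp y s `^ gamma + K * d.
  move=> s Ss.
  have a0 := dotp_ge0 _ _ hx Ss; have b0 := dotp_ge0 _ _ hy Ss.
  have aM : dotp x s <= M by apply: le_trans (dotp_le _ _ hx Ss) sx.
  have bM : dotp y s <= M by apply: le_trans (dotp_le _ _ hy Ss) sy.
  have hd := @dotp_diff_le x y s Ss.
  have [ba|ab] := leP (dotp y s) (dotp x s).
    apply: aux1 (powR_lip1 _ _ _ g1 b0 ba aM) _.
    apply: ler_wpM2l => //; apply: le_trans hd.
    exact: ler_norm.
  apply: aux2 => //; last exact: mulr_ge0.
  by apply: ge0_ler_powR => //; rewrite ?nnegrE // ltW.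
have Hint : (eta x <= \int[Psi]_(s in S) ((dotp y s `^ gamma)%:E + (K * d)%:E))%E.
  apply: ge0_le_integral.
  - exact: mS.
  - by move=> s _; rewrite lee_fin powR_ge0.
  - exact: mhh.
  - apply: emeasurable_funD; first exact: mhh.
    exact: measurable_cst.
  - by move=> s Ss; rewrite -EFinD lee_fin (pw s Ss).
rewrite ge0_integralD in Hint; last 5 first.
- exact: mS.
- by move=> s _; rewrite lee_fin powR_ge0.
- exact: mhh.
- by move=> s _; rewrite lee_fin mulr_ge0.
- exact: measurable_cst.
have Hc : (\int[Psi]_(s in S) (K * d)%:E <= (K * d)%:E)%E.
  have -> : (\int[Psi]_(s in S) (K * d)%:E = \int[Psi]_(s in S) cst (K * d)%:E s)%E by [].
  rewrite integral_cst; last exact: mS.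
  rewrite -[leRHS]mule1; apply: lee_wpmul2l; first by rewrite lee_fin mulr_ge0.
  exact: probability_le1 _ mS.
have H2 : (eta x <= eta y + (K * d)%:E)%E.
  apply: le_trans Hint _; exact: leeD2l.
have fx := eta_fin x g0 hx; have fy := eta_fin y g0 hy.
rewrite -(fineK fy) -EFinD in H2.
exact: (@fine_le _ (eta x) ((fine (eta y) + K * d)%:E) fx isT H2).
Qed.

Lemma eta_mid_lt x y : 1 < gamma -> Psi S = 1%E ->
  (forall a : n.-tuple R, (exists i, tnth a i != 0) ->
     Psi [set s | S s /\ dotp a s = 0] = 0%E) ->
  nonneg x -> nonneg y -> x != y ->
  fine (eta (mid x y)) < (fine (eta x) + fine (eta y)) / 2.
Proof.
move=> g1 PS P0 hx hy xy.
have g0 : 0 <= gamma by apply: le_trans (ltW g1).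
set m := mid x y.
have hm : nonneg m by apply: nonneg_mid.
pose f s := dotp x s `^ gamma + dotp y s `^ gamma - 2 * dotp m s `^ gamma.
have f0 : forall s, S s -> 0 <= f s.
  move=> s Ss; apply: aux3; rewrite /m dotp_mid.
  by apply: powR_mid_le => //; apply: dotp_ge0.
have mf : measurable_fun S f.
  apply: measurable_funB; first by apply: measurable_funD; exact: mhr.
  apply: measurable_funM; [exact: measurable_cst | exact: mhr].
have mF : measurable_fun S (fun s => (f s)%:E) by apply/measurable_EFinP.
set I := (\int[Psi]_(s in S) (f s)%:E)%E.
have I0 : (0 <= I)%E by apply: integral_ge0 => s Ss; rewrite lee_fin f0.
have E : (eta x + eta y = 2%:E * eta m + I)%E.
  rewrite -ge0_integralD; first last.
  - exact: mhh.
  - by move=> s _; rewrite lee_fin powR_ge0.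
  - exact: mhh.
  - by move=> s _; rewrite lee_fin powR_ge0.
  - exact: mS.
  rewrite -ge0_integralZl; first last.
  - by rewrite lee_fin.
  - by move=> s _; rewrite lee_fin powR_ge0.
  - exact: mhh.
  - exact: mS.
  rewrite /I -ge0_integralD; first last.
  - exact: mF.
  - by move=> s Ss; rewrite lee_fin f0.
  - apply: emeasurable_funM; [exact: measurable_cst | exact: mhh].
  - by move=> s _; rewrite mule_ge0 // lee_fin powR_ge0.
  - exact: mS.
  apply: eq_integral => s _.
  by rewrite -EFinM -!EFinD /f aux5.
have Ipos : (0 < I)%E.
  rewrite lt_neqAle I0 andbT; apply/negP => /eqP I00.
  have Habs : (\int[Psi]_(s in S) `|(f s)%:E| = 0)%E.
    rewrite [RHS]I00 /I; apply: eq_integral => s; rewrite inE => Ss.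
    by rewrite gee0_abs // lee_fin f0.
  have [A [mA PA0 sub]] := (ae_eq_integral_abs Psi mS mF).1 Habs.
  have [i hi] : exists i, tnth (tsub x y) i != 0.
    apply: contrapT => Hn; move/eqP: xy; apply; apply: eq_from_tnth => i.
    apply/eqP; rewrite -subr_eq0; apply/negPn/negP => hi.
    by apply: Hn; exists i; rewrite tnth_mktuple.
  have PZ := P0 (tsub x y) (ex_intro _ i hi).
  have sSAZ : S `<=` A `|` [set s | S s /\ dotp (tsub x y) s = 0].
    move=> s Ss; have [hz|hz] := eqVneq (dotp (tsub x y) s) 0.
      by right.
    left; apply: sub => /= H; have := H Ss; apply/eqP.
    rewrite eqe; apply: lt0r_neq0.
    apply: aux4; rewrite /m dotp_mid; apply: powR_mid_lt => //; try exact: dotp_ge0.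
    by move: hz; rewrite dotp_tsub subr_eq0.
  have : (Psi S <= Psi A + Psi [set s | S s /\ dotp (tsub x y) s = 0%R])%E.
    apply: le_trans (measureU2 Psi mA (mZ (tsub x y))).
    apply: le_measure; rewrite ?inE //; first exact: mS.
    exact: measurableU mA (mZ (tsub x y)).
  by rewrite PS PA0 PZ adde0 lee_fin ler10.
have fx := eta_fin x g0 hx; have fy := eta_fin y g0 hy; have fm := eta_fin m g0 hm.
rewrite -(fineK fx) -(fineK fy) -(fineK fm) -EFinD -EFinM in E.
clearbody I; move: E Ipos; clear I0; case: I => [r| |] //= E Ipos.
  apply: (@aux6 _ _ _ _ r) => //.
  by move: E => /eqP; rewrite -EFinD eqe => /eqP.
Qed.

Lemma lip_within (A : set 'rV[R]_n) (f : 'rV[R]_n -> R) (C : R) : 0 <= C ->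
  (forall v w, A v -> A w -> `|f v - f w| <= C * `|v - w|) -> {within A, continuous f}.
Proof.
move=> C0 H; apply/subspace_continuousP => x Ax.
apply/cvgrPdist_lt => e e0.
rewrite /within /=.
apply/nbhs_ballP.
have C1 : 0 < C + 1 by rewrite ltr_wpDl.
exists (e / (C + 1)); first by rewrite /= divr_gt0.
move=> t; rewrite -ball_normE /= => Bt At.
rewrite /from_subspace.
apply: le_lt_trans (H _ _ Ax At) _.
apply: le_lt_trans (_ : C * `|x - t| <= (C + 1) * `|x - t|) _.
  by apply: ler_wpM2r => //; rewrite lerDl.
by rewrite -ltr_pdivlMl // mulrC.
Qed.

Lemma lip_all (f : 'rV[R]_n -> R) (C : R) : 0 <= C ->
  (forall v w, `|f v - f w| <= C * `|v - w|) -> continuous f.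
Proof.
move=> C0 H; apply/continuous_subspace_setT; apply: (@lip_within setT f C C0).
by move=> v w _ _; exact: H.
Qed.

Lemma coord_le (v : 'rV[R]_n) i : `|v ord0 i| <= `|v|.
Proof.
rewrite [leRHS]/Num.Def.normr /= mx_normrE; apply/bigmax_geP; right => /=.
by exists (ord0, i).
Qed.

Lemma sum_coord_le (v w : 'rV[R]_n) :
  \sum_(i < n) `|v ord0 i - w ord0 i| <= n%:R * `|v - w|.
Proof.
apply: le_trans (_ : \sum_(i < n) `|v - w| <= _).
  apply: ler_sum => i _; have := coord_le (v - w) i; by rewrite !mxE.
by rewrite sumr_const card_ord mulr_natl.
Qed.

Definition tupv (v : 'rV[R]_n) : n.-tuple R := [tuple v ord0 i | i < n].
Definition rowt (x : n.-tuple R) : 'rV[R]_n := \row_i tnth x i.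

Lemma tupv_rowt x : tupv (rowt x) = x.
Proof. by apply: eq_from_tnth => i; rewrite tnth_mktuple mxE. Qed.

Section Main.
Context (g1 : 1 < gamma) (PS : Psi S = 1%E)
  (P0 : forall a : n.-tuple R, (exists i, tnth a i != 0) ->
     Psi [set s | S s /\ dotp a s = 0] = 0%E)
  (Hpos : forall i : 'I_n, (0 < eta (basis_vec R i))%E).

Let g0 : 0 <= gamma. Proof. exact: le_trans (ltW g1). Qed.

Lemma nonneg_basis i : nonneg (basis_vec R i).
Proof. by move=> j; rewrite tnth_mktuple; case: ifP. Qed.

Lemma cc_gt0 i : 0 < cc i.
Proof.
apply: powR_gt0; apply: fine_gt0; rewrite Hpos /=.
by rewrite ltey_eq eta_fin //; exact: nonneg_basis.
Qed.

Lemma tnth_scl t x i : tnth (scl t x) i = t * tnth x i.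
Proof. by rewrite tnth_mktuple. Qed.

Lemma sum_scl t x : \sum_(i < n) tnth (scl t x) i = t * \sum_(i < n) tnth x i.
Proof. by rewrite mulr_sumr; apply: eq_bigr => i _; rewrite tnth_scl. Qed.

Lemma scl_inv t x : t != 0 -> scl t (scl t^-1 x) = x.
Proof.
by move=> t0; apply: eq_from_tnth => i; rewrite !tnth_scl mulrA divff // mul1r.
Qed.

Lemma LL_mid x y : LL (mid x y) = (LL x + LL y) / 2.
Proof.
rewrite /LL -big_split /= mulr_suml; apply: eq_bigr => i _.
by rewrite tnth_mktuple mulrAC mulrDl.
Qed.

Lemma le_sum_nonneg x i : nonneg x -> tnth x i <= \sum_(j < n) tnth x j.
Proof.
by move=> hx; rewrite (bigD1 i) //= lerDl sumr_ge0 // => j _.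
Qed.

Definition Kp (x : n.-tuple R) := nonneg x /\ LL x = 1.

Lemma nonneg_S {w} : S w -> nonneg w.
Proof. by move=> [h _] i; case/andP: (h i). Qed.

Lemma LL_gt0_S {w} : S w -> 0 < LL w.
Proof.
move=> Sw; have hw := nonneg_S Sw.
rewrite lt_neqAle LL_ge0 // andbT; apply/negP => /eqP L0.
have H := psumr_eq0P (fun i _ => mulr_ge0 (hw i) (ltW (cc_gt0 i))) (esym L0).
case: Sw => _ s1; move: s1; rewrite big1 => [/eqP|i _]; first by rewrite eq_sym oner_eq0.
by have /eqP := H i isT; rewrite mulf_eq0 (gt_eqF (cc_gt0 i)) orbF => /eqP.
Qed.

Lemma sum_gt0_K {x} : Kp x -> 0 < \sum_(i < n) tnth x i.
Proof.
move=> [hx Lx]; rewrite lt_neqAle sumr_ge0 // andbT; apply/negP => /eqP s0.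
have H := psumr_eq0P (fun i _ => hx i) (esym s0).
move: Lx; rewrite /LL big1 => [/eqP|i _]; first by rewrite eq_sym oner_eq0.
by rewrite H // mul0r.
Qed.

Lemma K_of_S {w} : S w -> Kp (scl (LL w)^-1 w).
Proof.
move=> Sw; have L0 := LL_gt0_S Sw; split.
  by apply: nonneg_scl; [rewrite invr_ge0 ltW | exact: nonneg_S].
by rewrite LL_scl mulVf // gt_eqF.
Qed.

Lemma S_of_K {x} : Kp x -> S (scl (\sum_(i < n) tnth x i)^-1 x).
Proof.
move=> Kx; have s0 := sum_gt0_K Kx; have hx := Kx.1; split.
  move=> i; rewrite tnth_scl; apply/andP; split.
    by rewrite mulr_ge0 // invr_ge0 ltW.
  by rewrite mulrC ler_pdivrMr // mul1r le_sum_nonneg.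
by rewrite sum_scl mulVf // gt_eqF.
Qed.

Lemma fobj_K x : Kp x -> fobj Psi gamma x = fine (eta x).
Proof. by move=> [_ Lx]; rewrite fobjE Lx powR1 divr1. Qed.

Lemma fobj_S_K w : S w -> fobj Psi gamma w = fine (eta (scl (LL w)^-1 w)).
Proof.
move=> Sw; have L0 := LL_gt0_S Sw.
rewrite -fobj_K; last exact: K_of_S.
by rewrite fobj_scl // ?invr_gt0 //; exact: nonneg_S.
Qed.

Lemma fobj_K_S x : Kp x ->
  fobj Psi gamma (scl (\sum_(i < n) tnth x i)^-1 x) = fine (eta x).
Proof.
move=> Kx; rewrite fobj_scl //; first exact: fobj_K.
  by rewrite invr_gt0 sum_gt0_K.
exact: Kx.1.
Qed.

Lemma term_le_sum (F : 'I_n -> R) i : (forall j, 0 <= F j) -> F i <= \sum_(j < n) F j.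
Proof. by move=> hF; rewrite (bigD1 i) //= lerDl sumr_ge0. Qed.

Lemma exists_index : exists i : 'I_n, True.
Proof.
case: (pselect (exists i : 'I_n, True)) => // hn.
have S0 : S = set0.
  apply/seteqP; split => s // [_ s1]; move: s1; rewrite big1 => [/eqP|i _].
    by rewrite eq_sym oner_eq0.
  by exfalso; apply: hn; exists i.
by move: PS; rewrite S0 measure0 => /esym/eqP; rewrite onee_eq0.
Qed.

Lemma LL_basis i : LL (basis_vec R i) = cc i.
Proof.
rewrite /LL (bigD1 i) //= big1 => [|j ji]; first by rewrite tnth_mktuple eqxx mul1r addr0.
by rewrite tnth_mktuple (negbTE ji) mul0r.
Qed.

Lemma exists_min_K : exists2 xs, Kp xs & forall x, Kp x -> fine (eta xs) <= fine (eta x).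
Proof.
pose Kset := [set v : 'rV[R]_n | Kp (tupv v)].
pose M := \sum_(i < n) (cc i)^-1.
have coordK x i : Kp x -> tnth x i <= (cc i)^-1.
  move=> [hx Lx]; rewrite -(ler_pM2r (cc_gt0 i)) mulVf ?gt_eqF ?cc_gt0 //.
  rewrite -Lx; apply: (@term_le_sum (fun j => tnth x j * cc j)) => j.
  by rewrite mulr_ge0 // ltW // cc_gt0.
have Kbound x : Kp x -> \sum_(i < n) tnth x i <= M.
  by move=> Kx; apply: ler_sum => i _; exact: coordK.
have [i0 _] := exists_index.
have A0 : Kset !=set0.
  exists (rowt (scl (cc i0)^-1 (basis_vec R i0))); rewrite /Kset /= tupv_rowt; split.
    by apply: nonneg_scl; [rewrite invr_ge0 ltW // cc_gt0 | exact: nonneg_basis].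
  by rewrite LL_scl LL_basis mulVf // gt_eqF // cc_gt0.
have cK : compact Kset.
  have cB : compact [set v : 'rV[R]_n | forall i, `[0, (cc i)^-1]%classic (v ord0 i)].
    by apply: (@rV_compact _ _ (fun i => `[0, (cc i)^-1]%classic)) => i; exact: segment_compact.
  apply: (subclosed_compact _ cB).
    have -> : Kset = (\bigcap_(i in setT) [set v : 'rV[R]_n | 0 <= v ord0 i])
        `&` ((fun v => LL (tupv v)) @^-1` [set 1]).
      apply/seteqP; split => v /=.
        by move=> [hv Lv]; split => // i _ /=; have := hv i; rewrite tnth_mktuple.
      by move=> [hv Lv]; split => // i; rewrite tnth_mktuple; exact: hv.
    apply: closedI.
      apply: closed_bigI => i _.
      have -> : [set v : 'rV[R]_n | 0 <= v ord0 i] = (fun v : 'rV[R]_n => v ord0 i) @^-1` [set x : R | 0 <= x] by [].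
      apply: preimage_closed; last exact: closed_ge.
      by move=> v _; exact: coord_continuous.
    apply: preimage_closed; last exact: closed_eq.
    move=> v _; apply: (@lip_all _ (\sum_(i < n) cc i)).
      by apply: sumr_ge0 => i _; exact/ltW/cc_gt0.
    move=> a b; rewrite /LL -sumrB.
    apply: le_trans (ler_norm_sum _ _ _) _; rewrite mulr_suml; apply: ler_sum => i _.
    rewrite !tnth_mktuple -mulrBl normrM (gtr0_norm (cc_gt0 i)) mulrC ler_wpM2l //.
      exact/ltW/cc_gt0.
    by have := coord_le (a - b) i; rewrite !mxE.
  move=> v [hv Lv] i; rewrite /= in_itv /=; have := coordK _ i (conj hv Lv).
  by rewrite tnth_mktuple => ->; rewrite andbT; have := hv i; rewrite tnth_mktuple.
have g1' : 1 <= gamma by exact: ltW.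
pose Kc := gamma * M `^ (gamma - 1).
have Kc0 : 0 <= Kc by rewrite mulr_ge0 // powR_ge0.
have cont : {within Kset, continuous (fun v => fine (eta (tupv v)))}.
  apply: (@lip_within _ _ (Kc * n%:R)); first by rewrite mulr_ge0.
  move=> v w Kv Kw.
  have h1 := eta_lip (tupv v) (tupv w) M g1' Kv.1 Kw.1 (Kbound _ Kv) (Kbound _ Kw).
  have h2 := eta_lip (tupv w) (tupv v) M g1' Kw.1 Kv.1 (Kbound _ Kw) (Kbound _ Kv).
  have dsym : \sum_(i < n) `|tnth (tupv w) i - tnth (tupv v) i| =
      \sum_(i < n) `|tnth (tupv v) i - tnth (tupv w) i|.
    by apply: eq_bigr => i _; rewrite distrC.
  rewrite dsym in h2.
  have H := aux7 _ _ _ _ h1 h2.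
  apply: le_trans H _.
  rewrite -/Kc -mulrA ler_wpM2l //.
  under eq_bigr do rewrite !tnth_mktuple.
  exact: sum_coord_le.
have [c cK' cmin] := compact_EVT_min A0 cK cont.
exists (tupv c); first by move: cK'; rewrite inE.
move=> x Kx; have := cmin (rowt x); rewrite tupv_rowt; apply.
by rewrite inE /Kset /= tupv_rowt.
Qed.


Lemma main_result : exists w : n.-tuple R,
    [/\ S w,
        (forall v, S v -> fobj Psi gamma w <= fobj Psi gamma v)
      & (forall w', S w' ->
           (forall v, S v -> fobj Psi gamma w' <= fobj Psi gamma v) ->
           w' = w)].
Proof.
have [xs Kxs xmin] := exists_min_K.
exists (scl (\sum_(i < n) tnth xs i)^-1 xs); split.
- exact: S_of_K.
- move=> v Sv; have E1 := fobj_K_S _ Kxs; have E2 := fobj_S_K _ Sv.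
  rewrite E1 E2.
  apply: xmin; exact: K_of_S.
- move=> w' Sw' hw'.
  have Kx' := K_of_S Sw'.
  have e1 : fine (eta (scl (LL w')^-1 w')) <= fine (eta xs).
    have E1 := fobj_K_S _ Kxs; have E2 := fobj_S_K _ Sw'.
    have H := hw' _ (S_of_K Kxs).
    by move: H; rewrite E1 E2.
  have xe : scl (LL w')^-1 w' = xs.
    apply/eqP; apply/negPn/negP => ne.
    have Km : Kp (mid (scl (LL w')^-1 w') xs).
      split; first by apply: nonneg_mid; [exact: Kx'.1 | exact: Kxs.1].
      by rewrite LL_mid Kx'.2 Kxs.2 twice_half.
    have h1 := eta_mid_lt _ _ g1 PS P0 Kx'.1 Kxs.1 ne.
    have h2 := xmin _ Km.
    exact: (aux8 _ _ _ _ h2 h1 e1).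
  have L0 := LL_gt0_S Sw'.
  have ww : w' = scl (LL w') xs by rewrite -xe scl_inv // gt_eqF.
  have s0 := sum_gt0_K Kxs.
  case: Sw' => _ sw; move: sw; rewrite ww sum_scl => sw.
  have -> : LL w' = (\sum_(i < n) tnth xs i)^-1.
    by rewrite -[LL w'](mulfK (lt0r_neq0 s0)) sw mul1r.
  done.
Qed.

End Main.
End Dev.

Theorem mainTheorem12 (R : realType) (n : nat) (gamma : R)
  (Psi : probability (n.-tuple R) R) :
  1 < gamma ->
  Psi (simplex R n) = 1%E ->
  (forall a : n.-tuple R, (exists i, tnth a i != 0) ->
     Psi [set s | simplex R n s /\ dotp a s = 0] = 0%E) ->
  (forall i : 'I_n, (0 < eta_int Psi gamma (basis_vec R i))%E) ->
  exists w : n.-tuple R,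
    [/\ simplex R n w,
        (forall v, simplex R n v -> fobj Psi gamma w <= fobj Psi gamma v)
      & (forall w', simplex R n w' ->
           (forall v, simplex R n v -> fobj Psi gamma w' <= fobj Psi gamma v) ->
           w' = w)].
Proof.
exact: (@main_result R n gamma Psi).
Qed.
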